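(* For an undirected graph $G=(V,E)$ with edge capacities $u_e\in\mathbb{Z}_{\ge0}$ for all $e\in E$, terminals $s_1,s_2,t_1,t_2$, and nonnegative integers $k_1,k_2$, it holds that $2\,c_{2k_1,2k_2}(G)\ge c_{k_1,k_2}(G)$.
   Context: $\delta(S)$ denotes the set of edges with exactly one endpoint in $S$. Say $S\subseteq V$ separates commodity $i$ if exactly one of $s_i,t_i$ lies in $S$. For nonnegative integers $a,b$ define $\mathrm{dem}_{a,b}(S)=a$ if $S$ separates commodity 1 but not commodity 2, $=b$ if $S$ separates commodity 2 but not commodity 1, $=a+b$ if $S$ separates both commodities, and $=0$ otherwise. Define $c_{a,b}(S)=\max\{x\in\mathbb{R}_{\ge0}: \exists\, n(e)\in\mathbb{Z}_{\ge0}\ (e\in\delta(S))\text{ with } n(e)x\le u_e\ \forall e\in\delta(S),\ \sum_{e\in\delta(S)}n(e)\ge \mathrm{dem}_{a,b}(S)\}$ and $c_{a,b}(G)=\min\{c_{a,b}(S): S\subseteq V,\ \mathrm{dem}_{a,b}(S)\neq 0\}$. *)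

(* Defs.v *)
From HB Require Import structures.
From mathcomp Require Import all_boot all_order all_algebra.
From mathcomp Require Import reals.
Set Implicit Arguments. Unset Strict Implicit. Unset Printing Implicit Defensive.
Import Order.TTheory GRing.Theory Num.Theory.
Local Open Scope ring_scope.

(* An undirected graph on the finite vertex type V: its edge set E is a set of
   2-element vertex sets.  delta E S = edges with exactly one endpoint in S. *)
Definition delta (V : finType) (E : {set {set V}}) (S : {set V}) : {set {set V}} :=
  [set e in E | #|e :&: S| == 1%N].

Definition separates (V : finType) (S : {set V}) (s t : V) : bool :=
  (s \in S) != (t \in S).

Definition dem (V : finType) (s1 t1 s2 t2 : V) (a b : nat) (S : {set V}) : nat :=
  match separates S s1 t1, separates S s2 t2 with
  | true, false => a
  | false, true => b
  | true, true => (a + b)%N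
  | false, false => 0%N
  end.

Definition cS_feasible (R : realType) (V : finType) (E : {set {set V}})
  (u : {set V} -> nat) (s1 t1 s2 t2 : V) (a b : nat) (S : {set V}) (x : R) : Prop :=
  0 <= x /\
  exists n : {set V} -> nat,
    (forall e, e \in delta E S -> (n e)%:R * x <= (u e)%:R) /\
    (dem s1 t1 s2 t2 a b S <= \sum_(e in delta E S) n e)%N.

Definition is_cS (R : realType) (V : finType) (E : {set {set V}})
  (u : {set V} -> nat) (s1 t1 s2 t2 : V) (a b : nat) (S : {set V}) (c : R) : Prop :=
  cS_feasible E u s1 t1 s2 t2 a b S c /\
  forall y, cS_feasible E u s1 t1 s2 t2 a b S y -> y <= c.

Definition is_cG (R : realType) (V : finType) (E : {set {set V}})
  (u : {set V} -> nat) (s1 t1 s2 t2 : V) (a b : nat) (c : R) : Prop :=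
  (exists S, dem s1 t1 s2 t2 a b S <> 0%N /\ is_cS E u s1 t1 s2 t2 a b S c) /\
  (forall S, dem s1 t1 s2 t2 a b S <> 0%N ->
     exists y, is_cS E u s1 t1 s2 t2 a b S y /\ c <= y).

(* Main.v *)
Require Import Defs.
From HB Require Import structures.
From mathcomp Require Import all_boot all_order all_algebra.
From mathcomp Require Import reals.
From mathcomp Require Import lra.
Import Order.TTheory GRing.Theory Num.Theory.
Local Open Scope ring_scope.

Lemma dem2 (V : finType) (s1 t1 s2 t2 : V) (a b : nat) (S : {set V}) :
  dem s1 t1 s2 t2 (2 * a)%N (2 * b)%N S = (2 * dem s1 t1 s2 t2 a b S)%N.
Proof.
rewrite /dem; case: (separates S s1 t1); case: (separates S s2 t2) => //.
by rewrite mulnDr.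
Qed.

Theorem mainTheorem4 (R : realType) (V : finType) (E : {set {set V}})
  (HE : forall e, e \in E -> #|e| = 2%N)
  (u : {set V} -> nat) (s1 t1 s2 t2 : V) (k1 k2 : nat) (c2 c1 : R) :
  is_cG E u s1 t1 s2 t2 (2 * k1)%N (2 * k2)%N c2 ->
  is_cG E u s1 t1 s2 t2 k1 k2 c1 ->
  c1 <= 2 * c2.
Proof.
move=> [[S [HdS [_ Hmax]]] _] [_ H1].
have Hd : dem s1 t1 s2 t2 k1 k2 S <> 0%N.
  by move=> H0; apply: HdS; rewrite dem2 H0.
have [y [[[y0 [n [Hn Hs]]] _] Hc1y]] := H1 S Hd.
apply: (le_trans Hc1y).
have : y / 2 <= c2.
  apply: Hmax; split; first by rewrite divr_ge0.
  exists (fun e => (2 * n e)%N); split.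
    move=> e He; rewrite natrM -mulrA (mulrC (n e)%:R) mulrA.
    rewrite mulrCA divff ?mulr1; first by rewrite mulrC; exact: Hn.
    by rewrite pnatr_eq0.
  have -> := @dem2 V s1 t1 s2 t2 k1 k2 S.
  by rewrite -big_distrr /= leq_mul2l Hs orbT.
move=> H; lra.
Qed.
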